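(* Let $S(t,p,q)=\sum_{\pi}t^{|\pi|}p^{\mathrm{asc}(\pi)}q^{\mathrm{des}(\pi)}$, summed over all separable permutations $\pi$, and let $I(t,p,q)$ be the same sum restricted to irreducible separable permutations. Then $$pq\,S(t,p,q)^3+pq\,t\,S(t,p,q)^2+S(t,p,q)\bigl((p+q)t-1\bigr)+t=0$$ and $$I(t,p,q)=\frac{t+q\,(t+S(t,p,q))\,S(t,p,q)}{1+q\,S(t,p,q)}.$$
   Context: A permutation of length $n$ is a word $\pi=\pi_1\cdots\pi_n$ containing each element of $[n]$ exactly once; $|\pi|=n$. For $\pi$ of length $m$ and $\sigma$ of length $n$, $\pi\oplus\sigma=\pi_1\cdots\pi_m(\sigma_1+m)\cdots(\sigma_n+m)$ and $\pi\ominus\sigma=(\pi_1+n)\cdots(\pi_m+n)\sigma_1\cdots\sigma_n$. Separable permutations are the permutations of length $\ge1$ obtained from the permutation $1$ by repeatedly applying $\oplus$ and $\ominus$ (equivalently, those avoiding $2413$ and $3142$). The permutation $1$ is irreducible; a permutation of length $n\ge2$ is irreducible if there is no $i$ with $2\le i\le n$ such that every element of $\pi_1\cdots\pi_{i-1}$ is less than every element of $\pi_i\cdots\pi_n$. $\mathrm{asc}(\pi)=\#\{i<n:\pi_i<\pi_{i+1}\}$, $\mathrm{des}(\pi)=\#\{i<n:\pi_i>\pi_{i+1}\}$. *)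

(* Defs.v *)
From HB Require Import structures.
From mathcomp Require Import all_boot all_order all_algebra.
From Stdlib Require Import ClassicalEpsilon.
Set Implicit Arguments. Unset Strict Implicit. Unset Printing Implicit Defensive.
Import Order.TTheory GRing.Theory Num.Theory.

Definition is_perm (s : seq nat) : bool := perm_eq s (iota 1 (size s)).

Definition oplus (a b : seq nat) : seq nat := a ++ map (addn (size a)) b.
Definition ominus (a b : seq nat) : seq nat := map (addn (size b)) a ++ b.

Inductive separable : seq nat -> Prop :=
| sep_one : separable [:: 1]
| sep_plus a b : separable a -> separable b -> separable (oplus a b)
| sep_minus a b : separable a -> separable b -> separable (ominus a b).

Definition separableb (s : seq nat) : bool :=
  if excluded_middle_informative (separable s) then true else false.

(* Irreducible: pi = 1, or length >= 2 and no i in [2,n] with every element of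
   pi_1..pi_{i-1} less than every element of pi_i..pi_n (here j = i-1). *)
Definition irreducible (s : seq nat) : bool :=
  (size s == 1) ||
  ((2 <= size s) &&
   ~~ has (fun j => allrel (fun x y => x < y) (take j s) (drop j s))
          (iota 1 (size s).-1)).

Definition asc (s : seq nat) : nat :=
  count (fun i => nth 0 s i < nth 0 s i.+1) (iota 0 (size s).-1).
Definition des (s : seq nat) : nat :=
  count (fun i => nth 0 s i > nth 0 s i.+1) (iota 0 (size s).-1).

Local Open Scope ring_scope.

Definition Scoef (R : comNzRingType) (p q : R) (n : nat) : R :=
  \sum_(s <- permutations (iota 1 n) | separableb s) p ^+ asc s * q ^+ des s.
Definition Icoef (R : comNzRingType) (p q : R) (n : nat) : R :=
  \sum_(s <- permutations (iota 1 n) | separableb s && irreducible s)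
     p ^+ asc s * q ^+ des s.

(* truncations mod t^N, as polynomials in t *)
Definition Strunc (R : comNzRingType) (p q : R) (N : nat) : {poly R} :=
  \poly_(n < N) Scoef p q n.
Definition Itrunc (R : comNzRingType) (p q : R) (N : nat) : {poly R} :=
  \poly_(n < N) Icoef p q n.

(* Main.v *)
Require Import Defs.
From HB Require Import structures.
From mathcomp Require Import all_boot all_order all_algebra.
From mathcomp Require Import zify ring.
From Stdlib Require Import ClassicalEpsilon.
Import GRing.Theory.
Set Implicit Arguments. Unset Strict Implicit. Unset Printing Implicit Defensive.

Definition bnd (s : seq nat) := all (fun x => 0 < x <= size s) s.

Lemma is_perm_bnd s : is_perm s -> bnd s.
Proof.
move=> H; apply/allP => x xs; move: xs; rewrite (perm_mem H) mem_iota; lia.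
Qed.

Lemma size_oplus a b : size (oplus a b) = size a + size b.
Proof. by rewrite /oplus size_cat size_map. Qed.
Lemma size_ominus a b : size (ominus a b) = size a + size b.
Proof. by rewrite /ominus size_cat size_map. Qed.

Lemma sep_perm s : separable s -> is_perm s /\ 0 < size s.
Proof.
elim=> [|a b _ [Ha sa] _ [Hb sb]|a b _ [Ha sa] _ [Hb sb]].
- by [].
- rewrite size_oplus; split; last by lia.
  rewrite /is_perm size_oplus iotaD /oplus.
  apply: perm_cat => //.
  by rewrite addnC iotaDl; apply: perm_map.
- rewrite size_ominus; split; last by lia.
  rewrite /is_perm size_ominus addnC iotaD /ominus.
  rewrite perm_catC; apply: perm_cat => //.
  by rewrite addnC iotaDl; apply: perm_map.
Qed.

Definition op (d : bool) a b := if d then oplus a b else ominus a b.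
Definition ltd (d : bool) (x y : nat) := if d then x < y else y < x.
Definition irr (d : bool) (s : seq nat) : bool :=
  (size s == 1) ||
  ((2 <= size s) &&
   ~~ has (fun j => allrel (ltd d) (take j s) (drop j s))
          (iota 1 (size s).-1)).

Lemma irr_true s : irr true s = irreducible s.
Proof. by []. Qed.

Lemma size_op d a b : size (op d a b) = size a + size b.
Proof. by case: d; rewrite /= ?size_oplus ?size_ominus. Qed.

Lemma split_op d a b : bnd a -> bnd b ->
  allrel (ltd d) (take (size a) (op d a b)) (drop (size a) (op d a b)).
Proof.
move=> /allP Ha /allP Hb; case: d => /=.
- rewrite /oplus take_size_cat // drop_size_cat //.
  apply/allrelP => x y /Ha xa /mapP [z /Hb zb ->] /=; lia.
- rewrite /ominus take_size_cat ?size_map // drop_size_cat ?size_map //.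
  apply/allrelP => x y /mapP [z /Ha za ->] /Hb yb /=; lia.
Qed.

Lemma G1 d a b : bnd a -> bnd b -> 0 < size a -> 0 < size b -> ~~ irr d (op d a b).
Proof.
move=> Ha Hb sa sb; rewrite /irr size_op negb_or negb_and negbK.
apply/andP; split; first by lia.
apply/orP; right; apply/hasP; exists (size a); last exact: split_op.
rewrite mem_iota; lia.
Qed.

Lemma bnd_nth s i : bnd s -> i < size s -> 0 < nth 0 s i <= size s.
Proof. by move=> /allP H si; apply: H; apply: mem_nth. Qed.

Lemma G2 d a b : bnd a -> bnd b -> 0 < size a -> 0 < size b -> irr (~~ d) (op d a b).
Proof.
move=> Ha Hb sa sb; rewrite /irr size_op; apply/orP; right.
apply/andP; split; first by lia.
apply/(@hasPn nat) => j; rewrite mem_iota => /andP [Hj1 Hj2].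
set s := op d a b.
have ss : size s = size a + size b by rewrite size_op.
have sdef : s = op d a b by []. clearbody s.
have x_in : nth 0 s 0 \in take j s.
  rewrite -(@nth_take j); last by lia.
  apply: mem_nth; rewrite size_take; case: ifP => _; [exact Hj1 | rewrite ss; lia].
have y_in : nth 0 s (size a + size b).-1 \in drop j s.
  have -> : (size a + size b).-1 = j + (size a + size b - j).-1 by lia.
  rewrite -nth_drop; apply: mem_nth; rewrite size_drop; rewrite ss; lia.
apply/negP => /allrelP /(_ _ _ x_in y_in).
have H1 := bnd_nth (i:=0) Ha sa.
have H2 := bnd_nth (i:=(size b).-1) Hb.
have E1 : ((size a + size b).-1 < size a) = false by lia.
have E2 : (size a + size b).-1 - size a = (size b).-1 by lia.
have E3 : (size b).-1 < size b by lia.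
move: H2 => /(_ E3) H2.
rewrite sdef; case: d {x_in y_in sdef ss} => /=; rewrite /oplus /ominus !nth_cat ?size_map sa E1 E2.
- rewrite (nth_map 0) //; lia.
- rewrite (nth_map 0) //; lia.
Qed.

Lemma op_assoc d a1 a2 b : op d (op d a1 a2) b = op d a1 (op d a2 b).
Proof.
case: d => /=; rewrite /oplus /ominus ?size_cat ?size_map.
- rewrite -catA map_cat -map_comp; congr (_ ++ (_ ++ _)).
  by apply: eq_map => x /=; rewrite addnA.
- rewrite map_cat -map_comp -catA; congr (_ ++ _).
  by apply: eq_map => x /=; rewrite addnA [size a2 + _]addnC.
Qed.

Lemma sep_op d a b : separable a -> separable b -> separable (op d a b).
Proof. by case: d => /= Ha Hb; constructor. Qed.

Lemma sep_bnd s : separable s -> bnd s /\ 0 < size s.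
Proof. by move=> /sep_perm [H1 H2]; split => //; apply: is_perm_bnd. Qed.

Lemma G3 d s : separable s -> ~~ irr d s ->
  exists a b, [/\ separable a, irr d a, separable b & s = op d a b].
Proof.
have step : forall d' a b, separable a -> separable b ->
   (~~ irr d a -> exists a1 a2, [/\ separable a1, irr d a1, separable a2 & a = op d a1 a2]) ->
   ~~ irr d (op d' a b) ->
   exists a0 b0, [/\ separable a0, irr d a0, separable b0 & op d' a b = op d a0 b0].
  move=> d' a b sa sb IH Hn.
  have [ba na] := sep_bnd sa; have [bb nb] := sep_bnd sb.
  case: (eqVneq d' d) => [Ed|Nd].
  - subst d'; case Ia: (irr d a); first by exists a, b.
    have [a1 [a2 [s1 i1 s2 ->]]] := IH (negbT Ia).
    exists a1, (op d a2 b); split => //; first exact: sep_op.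
    by rewrite op_assoc.
  - have : irr (~~ d') (op d' a b) by apply: G2.
    have -> : ~~ d' = d by move: Nd; clear; case: d; case: d'.
    by rewrite (negbTE Hn).
move=> H; elim: H => [|a b sa IHa sb _|a b sa IHa sb _] Hn.
- by [].
- exact: (step true).
- exact: (step false).
Qed.

Definition xpart d (a b : seq nat) := if d then a else map (addn (size b)) a.
Definition ypart d (a b : seq nat) := if d then map (addn (size a)) b else b.
Lemma op_cat d a b : op d a b = xpart d a b ++ ypart d a b.
Proof. by case: d. Qed.
Lemma size_xpart d a b : size (xpart d a b) = size a.
Proof. by case: d; rewrite /= ?size_map. Qed.
Lemma size_ypart d a b : size (ypart d a b) = size b.
Proof. by case: d; rewrite /= ?size_map. Qed.

Lemma noprefix d a1 b1 a2 b2 : bnd a1 -> bnd b1 -> 0 < size a1 ->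
  size a1 < size a2 -> irr d a2 -> op d a1 b1 = op d a2 b2 -> False.
Proof.
move=> ba bb na lt12 Ir E.
have H := split_op d ba bb; rewrite E op_cat take_cat drop_cat size_xpart lt12 in H.
move: H; rewrite allrel_catr => /andP [H _].
have H' : allrel (ltd d) (take (size a1) a2) (drop (size a1) a2).
  move: H; case: d {E Ir} => //=.
  rewrite -map_take -map_drop allrel_mapl allrel_mapr /ltd /=.
  move=> /allrelP Hr; apply/allrelP => x y xi yi; move: (Hr x y xi yi); lia.
move: Ir; rewrite /irr; case/orP => [/eqP s1|/andP [_ /hasPn /(_ (size a1))]].
- lia.
- rewrite mem_iota H'.
  have -> : (0 < size a1 < 1 + (size a2).-1) = true by apply/andP; split; lia.
  by move=> /(_ isT).
Qed.

Lemma G4 d a1 b1 a2 b2 : bnd a1 -> bnd b1 -> bnd a2 -> bnd b2 ->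
  0 < size a1 -> 0 < size a2 -> irr d a1 -> irr d a2 ->
  op d a1 b1 = op d a2 b2 -> a1 = a2 /\ b1 = b2.
Proof.
move=> ba1 bb1 ba2 bb2 n1 n2 i1 i2 E.
have sa : size a1 = size a2.
  case: (ltngtP (size a1) (size a2)) => // H.
  - by case: (noprefix ba1 bb1 n1 H i2 E).
  - by case: (noprefix ba2 bb2 n2 H i1 (esym E)).
have sb : size b1 = size b2.
  by move: (congr1 size E); rewrite !size_op sa => /addnI.
move: E; rewrite !op_cat => /eqP; rewrite eqseq_cat ?size_xpart //.
case/andP => /eqP X /eqP Y; move: X Y; case: d {i1 i2} => /=.
- by move=> -> /(inj_map (@addnI _)).
- by rewrite sb => /(inj_map (@addnI _)) -> ->.
Qed.

Fixpoint cnt (r : rel nat) (s : seq nat) : nat :=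
  match s with
  | x :: ((y :: _) as t) => r x y + cnt r t
  | _ => 0
  end.

Lemma count_cnt r s :
  count (fun i => r (nth 0 s i) (nth 0 s i.+1)) (iota 0 (size s).-1) = cnt r s.
Proof.
elim: s => [|x t IH] //=; case: t IH => [|y u] IH //=.
rewrite -[RHS]/(r x y + cnt r (y :: u)) -IH /=; congr (_ + _).
rewrite -[1]/(1 + 0) iotaDl count_map; apply: eq_count => i /=.
by [].
Qed.

Lemma asc_cnt s : asc s = cnt ltn s.
Proof. by rewrite /asc -count_cnt. Qed.
Lemma des_cnt s : des s = cnt (fun x y => y < x) s.
Proof. by rewrite /des -count_cnt. Qed.

Lemma cnt_cat r x a y c :
  cnt r ((x :: a) ++ (y :: c)) = cnt r (x :: a) + r (last x a) y + cnt r (y :: c).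
Proof.
elim: a x => [|z a IH] x /=; first by rewrite add0n.
by move: (IH z) => /= ->; rewrite !addnA.
Qed.

Lemma cnt_map r f s : cnt r (map f s) = cnt (fun x y => r (f x) (f y)) s.
Proof.
elim: s => [|x s IH] //=; case: s IH => [|y s] IH //=.
by move: IH => /= ->.
Qed.

Lemma cnt_ext r r' s : r =2 r' -> cnt r s = cnt r' s.
Proof.
move=> E; elim: s => [|x s IH] //=; case: s IH => [|y s] IH //=.
by move: IH => /= ->; rewrite E.
Qed.

Lemma cnt_shift (r : rel nat) k s :
  (forall x y, r (k + x) (k + y) = r x y) -> cnt r (map (addn k) s) = cnt r s.
Proof. by move=> H; rewrite cnt_map; apply: cnt_ext => x y; rewrite H. Qed.

Lemma cnt_cat2 r s1 s2 : 0 < size s1 -> 0 < size s2 ->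
  cnt r (s1 ++ s2) = cnt r s1 + r (last 0 s1) (head 0 s2) + cnt r s2.
Proof. by case: s1 => [|x a] //; case: s2 => [|y b] // _ _; rewrite cnt_cat. Qed.

Lemma cnt_op (r : rel nat) d a b : 0 < size a -> 0 < size b ->
  (forall k x y, r (k + x) (k + y) = r x y) ->
  cnt r (op d a b) = cnt r a + cnt r b +
     r (last 0 (xpart d a b)) (head 0 (ypart d a b)).
Proof.
move=> na nb Hr; rewrite op_cat cnt_cat2 ?size_xpart ?size_ypart //.
case: d; rewrite /xpart /ypart cnt_shift // -!addnA; congr (_ + _); exact: addnC.
Qed.

Lemma last_in (s : seq nat) : 0 < size s -> last 0 s \in s.
Proof. by case: s => [|x s] // _; rewrite /= mem_last. Qed.
Lemma head_in (s : seq nat) : 0 < size s -> head 0 s \in s.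
Proof. by case: s => [|x s] // _; rewrite /= mem_head. Qed.

Lemma bound_op d a b : bnd a -> bnd b -> 0 < size a -> 0 < size b ->
  (last 0 (xpart d a b) < head 0 (ypart d a b)) = d /\
  (head 0 (ypart d a b) < last 0 (xpart d a b)) = ~~ d.
Proof.
move=> /allP ba /allP bb na nb.
have Hu := last_in (s := xpart d a b); have Hv := head_in (s := ypart d a b).
rewrite size_xpart size_ypart in Hu Hv.
move: (Hu na) (Hv nb); clear Hu Hv; case: d => /=.
- move=> /ba u /mapP [y /bb yb ->]; split; apply/idP/idP; lia.
- move=> /mapP [x /ba xa ->] /bb v; split; apply/idP/idP; lia.
Qed.

Lemma asc_op d a b : bnd a -> bnd b -> 0 < size a -> 0 < size b ->
  asc (op d a b) = asc a + asc b + d.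
Proof.
move=> ba bb na nb; rewrite !asc_cnt cnt_op //; last by move=> k x y; apply/idP/idP; lia.
by case: (bound_op d ba bb na nb) => E _; rewrite /ltn /= E.
Qed.

Lemma des_op d a b : bnd a -> bnd b -> 0 < size a -> 0 < size b ->
  des (op d a b) = des a + des b + ~~ d.
Proof.
move=> ba bb na nb; rewrite !des_cnt cnt_op //; last by move=> k x y; apply/idP/idP; lia.
by case: (bound_op d ba bb na nb) => _ ->.
Qed.

Lemma sepbE s : separableb s = true <-> separable s.
Proof. by rewrite /separableb; case: excluded_middle_informative. Qed.

Definition Alist d i := [seq s <- permutations (iota 1 i) | separableb s && irr d s].
Definition Blist m := [seq s <- permutations (iota 1 m) | separableb s].
Definition Llist d n :=
  flatten [seq [seq op d a b | a <- Alist d i, b <- Blist (n - i)] | i <- iota 0 n.+1].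

Lemma memA d i a : (a \in Alist d i) = [&& separableb a, irr d a & size a == i].
Proof.
rewrite mem_filter mem_permutations; case Sa: (separableb a) => //=.
have [Pa _] := sep_perm (proj1 (sepbE a) Sa).
case: (irr d a) => //=; apply/idP/idP => [/perm_size|/eqP <-] //.
by rewrite size_iota => ->.
Qed.

Lemma memB m b : (b \in Blist m) = separableb b && (size b == m).
Proof.
rewrite mem_filter mem_permutations; case Sb: (separableb b) => //=.
have [Pb _] := sep_perm (proj1 (sepbE b) Sb).
apply/idP/idP => [/perm_size|/eqP <-] //.
by rewrite size_iota => ->.
Qed.

Lemma L_mem d n x : (x \in Llist d n) =
  (x \in [seq s <- permutations (iota 1 n) | separableb s && ~~ irr d s]).
Proof.
rewrite mem_filter mem_permutations; apply/idP/idP.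
- case/flattenP => l /mapP [i]; rewrite mem_iota => Hi -> /allpairsP [[a b] /= [Ha Hb ->]].
  move: Ha Hb; rewrite memA memB => /and3P [Sa Ia /eqP sa] /andP [Sb /eqP sb].
  move/sepbE: Sa => Sa; move/sepbE: Sb => Sb.
  have [ba na] := sep_bnd Sa; have [bb nb] := sep_bnd Sb.
  have Sx : separable (op d a b) by apply: sep_op.
  have [Px _] := sep_perm Sx.
  have -> : separableb (op d a b) by apply/sepbE.
  rewrite G1 //=; move: Px; rewrite /is_perm size_op sa sb.
  by have -> : i + (n - i) = n by lia.
- move=> /andP [/andP [Sx Ix] Px]; move/sepbE: Sx => Sx.
  have [a [b [Sa Ia Sb E]]] := G3 Sx Ix.
  have [ba na] := sep_bnd Sa; have [bb nb] := sep_bnd Sb.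
  have sx : size x = n by rewrite (perm_size Px) size_iota.
  move: sx; rewrite E size_op => sx.
  apply/flattenP; exists [seq op d a0 b0 | a0 <- Alist d (size a), b0 <- Blist (n - size a)].
    apply/mapP; exists (size a) => //; rewrite mem_iota; lia.
  apply/allpairsP; exists (a, b) => /=; split => //.
  + by rewrite memA Ia eqxx andbT andbT; apply/sepbE.
  + rewrite memB; apply/andP; split; first by apply/sepbE.
    by rewrite -sx addKn.
Qed.

Lemma flatten_map_uniq (T : eqType) (l : seq nat) (F : nat -> seq T) :
  uniq l -> (forall i, uniq (F i)) ->
  (forall i j x, x \in F i -> x \in F j -> i = j) ->
  uniq (flatten (map F l)).
Proof.
move=> Ul UF K; elim: l Ul => [|i l IH] //= /andP [il Ul].
rewrite cat_uniq UF IH // andbT /=.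
apply/hasPn => x /flattenP [s /mapP [j jl ->]] xj; apply/negP => xi.
by move: il; rewrite (K _ _ _ xi xj) jl.
Qed.

Lemma L_uniq d n : uniq (Llist d n).
Proof.
apply: flatten_map_uniq; first exact: iota_uniq.
- move=> i; apply: allpairs_uniq.
  + by apply: filter_uniq; apply: permutations_uniq.
  + by apply: filter_uniq; apply: permutations_uniq.
  + move=> [a1 b1] [a2 b2] /allpairsP [[a b] /= [Ha Hb [-> ->]]].
    move=> /allpairsP [[a' b'] /= [Ha' Hb' [-> ->]]] /= E.
    move: Ha Hb Ha' Hb'; rewrite !memA !memB.
    move=> /and3P [/sepbE Sa Ia _] /andP [/sepbE Sb _] /and3P [/sepbE Sa' Ia' _] /andP [/sepbE Sb' _].
    have [ba na] := sep_bnd Sa; have [bb nb] := sep_bnd Sb.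
    have [ba' na'] := sep_bnd Sa'; have [bb' nb'] := sep_bnd Sb'.
    by have [-> ->] := G4 ba bb ba' bb' na na' Ia Ia' E.
- move=> i j x /allpairsP [[a b] /= [Ha Hb ->]] /allpairsP [[a' b'] /= [Ha' Hb' E]].
  move: Ha Hb Ha' Hb'; rewrite !memA !memB.
  move=> /and3P [/sepbE Sa Ia /eqP <-] /andP [/sepbE Sb _] /and3P [/sepbE Sa' Ia' /eqP <-] /andP [/sepbE Sb' _].
  have [ba na] := sep_bnd Sa; have [bb nb] := sep_bnd Sb.
  have [ba' na'] := sep_bnd Sa'; have [bb' nb'] := sep_bnd Sb'.
  by have [-> _] := G4 ba bb ba' bb' na na' Ia Ia' E.
Qed.

Section Ring.
Local Open Scope ring_scope.
Variables (R : comNzRingType) (p q : R).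

Definition Wt (s : seq nat) : R := p ^+ asc s * q ^+ des s.
Definition Xc d n : R :=
  \sum_(s <- permutations (iota 1 n) | separableb s && irr d s) Wt s.

Lemma Wt_op d a b : separable a -> separable b ->
  Wt (op d a b) = (if d then p else q) * (Wt a * Wt b).
Proof.
move=> Sa Sb; have [ba na] := sep_bnd Sa; have [bb nb] := sep_bnd Sb.
rewrite /Wt asc_op // des_op // !exprD.
by case: d => /=; rewrite ?expr1 ?expr0; ring.
Qed.

Lemma sum_split d n :
  \sum_(s <- permutations (iota 1 n) | separableb s && ~~ irr d s) Wt s =
  (if d then p else q) * \sum_(i <- iota 0 n.+1) Xc d i * Scoef p q (n - i)%N.
Proof.
rewrite -big_filter.
rewrite (perm_big _ (uniq_perm (filter_uniq _ (permutations_uniq _)) (L_uniq d n)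
            (fun x => esym (L_mem d n x)))).
rewrite /Llist big_flatten big_map big_distrr.
apply: eq_bigr => i _.
rewrite big_allpairs_dep.
have -> : Xc d i = \sum_(a <- Alist d i) Wt a by rewrite big_filter.
have -> : Scoef p q (n - i) = \sum_(b <- Blist (n - i)) Wt b by rewrite big_filter.
rewrite big_distrlr big_distrr; apply: eq_big_seq => a Ha /=.
rewrite big_distrr; apply: eq_big_seq => b Hb /=.
move: Ha Hb; rewrite memA memB => /and3P [/sepbE Sa _ _] /andP [/sepbE Sb _].
by rewrite Wt_op.
Qed.

Lemma S_eq d n : Scoef p q n =
  Xc d n + (if d then p else q) * \sum_(i <- iota 0 n.+1) Xc d i * Scoef p q (n - i)%N.
Proof. by rewrite -sum_split /Scoef (bigID (irr d)). Qed.

Lemma sepb_nil : separableb [::] = false.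
Proof. by apply/negbTE/negP => /sepbE /sep_perm [_]. Qed.

Lemma Scoef0 : Scoef p q 0 = 0.
Proof. by rewrite /Scoef /= big_cons big_nil sepb_nil. Qed.
Lemma Xc0 d : Xc d 0 = 0.
Proof. by rewrite /Xc /= big_cons big_nil sepb_nil. Qed.

Lemma irr_swap s : separable s -> size s != 1%N -> irr true s = ~~ irr false s.
Proof.
case => [|a b Sa Sb|a b Sa Sb] //= _;
  have [ba na] := sep_bnd Sa; have [bb nb] := sep_bnd Sb.
- have -> : oplus a b = op true a b by [].
  by rewrite (negbTE (G1 true ba bb na nb)) (G2 true ba bb na nb).
- have -> : ominus a b = op false a b by [].
  by rewrite (negbTE (G1 false ba bb na nb)) (G2 false ba bb na nb).
Qed.

Lemma I_eq n : Icoef p q n =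
  (n == 1)%:R + q * \sum_(i <- iota 0 n.+1) Xc false i * Scoef p q (n - i)%N.
Proof.
case: (eqVneq n 1) => [->|n1].
- rewrite /= !big_cons big_nil Xc0 Scoef0 !mul0r !mulr0 !addr0.
  rewrite mulr0 addr0 /Icoef.
  have -> : permutations (iota 1 1) = [:: [:: 1%N]] by [].
  rewrite big_cons big_nil.
  have -> : separableb [:: 1%N] by apply/sepbE; constructor.
  by rewrite /= addr0 mulr1.
- rewrite mulr0n add0r -(sum_split false) /Icoef.
  rewrite [LHS]big_seq_cond [RHS]big_seq_cond; apply: eq_bigl => s.
  rewrite mem_permutations; case Ps: (perm_eq s _) => //=.
  case Ss: (separableb s) => //=.
  rewrite -irr_true irr_swap //; first by apply/sepbE.
  by rewrite (perm_size Ps) size_iota.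
Qed.

Definition eqm N (P Q : {poly R}) := forall k, (k < N)%N -> P`_k = Q`_k.
Lemma eqm_eq N P Q : P = Q -> eqm N P Q. Proof. by move=> -> k. Qed.
Lemma eqm_sym N P Q : eqm N P Q -> eqm N Q P. Proof. by move=> H k /H. Qed.
Lemma eqm_trans N P Q U : eqm N P Q -> eqm N Q U -> eqm N P U.
Proof. by move=> H1 H2 k kN; rewrite H1 // H2. Qed.
Lemma eqm_add N P P' Q Q' : eqm N P P' -> eqm N Q Q' -> eqm N (P + Q) (P' + Q').
Proof. by move=> H1 H2 k kN; rewrite !coefD H1 // H2. Qed.
Lemma eqm_mul N P P' Q Q' : eqm N P P' -> eqm N Q Q' -> eqm N (P * Q) (P' * Q').
Proof.
move=> H1 H2 k kN; rewrite !coefM; apply: eq_bigr => [[i /= ik]] _.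
rewrite H1 ?H2 //; lia.
Qed.

Lemma sumI (F : nat -> R) k : \sum_(i <- iota 0 k) F i = \sum_(i < k) F i.
Proof. have -> : iota 0 k = index_iota 0 k by rewrite /index_iota subn0. by rewrite big_mkord. Qed.

Lemma conv N (a b : nat -> R) k : (k < N)%N ->
  ((\poly_(i < N) a i) * (\poly_(i < N) b i))`_k = \sum_(i < k.+1) a i * b (k - i)%N.
Proof.
move=> kN; rewrite coefM; apply: eq_bigr => [[i /= ik]] _.
rewrite !coef_poly.
have -> : (i < N)%N by lia.
by have -> : (k - i < N)%N by lia.
Qed.

Definition Jtrunc N : {poly R} := \poly_(n < N) Xc false n.

Lemma hA N : eqm N (Strunc p q N) (Itrunc p q N * (1 + p *: Strunc p q N)).
Proof.
move=> k kN; rewrite mulrDr mulr1 -scalerAr coefD coefZ conv //.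
rewrite /Strunc /Itrunc !coef_poly kN (S_eq true) sumI.
by [].
Qed.

Lemma hC N : eqm N (Strunc p q N) (Jtrunc N * (1 + q *: Strunc p q N)).
Proof.
move=> k kN; rewrite mulrDr mulr1 -scalerAr coefD coefZ conv //.
by rewrite /Strunc /Jtrunc !coef_poly kN (S_eq false) sumI.
Qed.

Lemma hB N : eqm N (Itrunc p q N) ('X + q *: (Jtrunc N * Strunc p q N)).
Proof.
move=> k kN; rewrite coefD coefZ conv // coefX.
by rewrite /Itrunc coef_poly kN I_eq sumI.
Qed.
End Ring.

Local Open Scope ring_scope.

Lemma main2 (R : comNzRingType) (p q : R) N :
  eqm N (Itrunc p q N * (1 + q *: Strunc p q N))
        ('X + q *: (('X + Strunc p q N) * Strunc p q N)).
Proof.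
set S := Strunc p q N; set I := Itrunc p q N; set J := Jtrunc p q N.
apply: (eqm_trans (Q := (('X + q *: (J * S)) * (1 + q *: S)))).
  by apply: eqm_mul; [apply: hB | apply: eqm_eq].
apply: (eqm_trans (Q := ('X * (1 + q *: S) + (q *: S) * (J * (1 + q *: S))))).
  by apply: eqm_eq; rewrite -!mul_polyC; ring.
apply: (eqm_trans (Q := ('X * (1 + q *: S) + (q *: S) * S))).
  apply: eqm_add; first exact: eqm_eq.
  by apply: eqm_mul; [apply: eqm_eq | apply: eqm_sym; apply: hC].
by apply: eqm_eq; rewrite -!mul_polyC; ring.
Qed.

Lemma main1 (R : comNzRingType) (p q : R) N :
  eqm N ((p * q) *: Strunc p q N ^+ 3 + (p * q) *: ('X * Strunc p q N ^+ 2)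
      + Strunc p q N * ((p + q) *: 'X - 1) + 'X) 0.
Proof.
set S := Strunc p q N; set I := Itrunc p q N.
have E : eqm N ((1 + p *: S) * ('X + q *: (('X + S) * S))) (S * (1 + q *: S)).
  apply: (eqm_trans (Q := ((1 + p *: S) * (I * (1 + q *: S))))).
    by apply: eqm_mul; [apply: eqm_eq | apply: eqm_sym; apply: main2].
  apply: (eqm_trans (Q := ((I * (1 + p *: S)) * (1 + q *: S)))).
    by apply: eqm_eq; ring.
  by apply: eqm_mul; [apply: eqm_sym; apply: hA | apply: eqm_eq].
have -> : (p * q) *: S ^+ 3 + (p * q) *: ('X * S ^+ 2) + S * ((p + q) *: 'X - 1) + 'X
   = (1 + p *: S) * ('X + q *: (('X + S) * S)) - S * (1 + q *: S).
  by rewrite -!mul_polyC polyCM polyCD; ring.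
by move=> k kN; rewrite coefB E // subrr coef0.
Qed.

Unset Implicit Arguments.
Set Strict Implicit.

Theorem theorem4 (R : comNzRingType) (p q : R) :
  (forall N k : nat, (k < N)%N ->
     let S := Strunc p q N in
     ((p * q) *: S ^+ 3 + (p * q) *: ('X * S ^+ 2)
      + S * ((p + q) *: 'X - 1) + 'X)`_k = 0)
  /\
  (forall N k : nat, (k < N)%N ->
     let S := Strunc p q N in
     let I := Itrunc p q N in
     (I * (1 + q *: S))`_k = ('X + q *: (('X + S) * S))`_k).
Proof.
split => N k kN; cbv zeta.
- by rewrite (main1 p q kN) coef0.
- exact: main2.
Qed.
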